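(* Let $K\ge1$, $n\ge1$, $\delta\in(0,1)$, $\ell_K=\sum_{k=1}^K1/k$, and $s\in\{1,\dots,K\}$. Define the half-widths $$h_{\mathrm e}(s)=\sqrt{\frac{\log\left(\frac{2K}{\delta s}\right)}{2n}}\cdot\frac{\log\left(\frac{2}{\delta}\right)+\log\left(\frac{2K}{\delta s}\right)}{2\sqrt{\log\left(\frac{2}{\delta}\right)\log\left(\frac{2K}{\delta s}\right)}},\qquad h(s)=\sqrt{\frac{\log\left(\frac{2K\ell_K}{\delta s}\right)}{2n}},$$ which are the half-widths of the intervals $C^{\delta\text{-}\mathrm{Hoef}}(\delta s/K)$ and $C^{\mathrm{Hoef}}(\delta s/(K\ell_K))$ centered at the sample mean. If $$s\ge\frac{K}{\exp\left(2\sqrt{\log\left(\frac{2}{\delta}\right)\log\ell_K}\right)},$$ then $h_{\mathrm e}(s)\le h(s)$, i.e. $C^{\delta\text{-}\mathrm{Hoef}}(\delta s/K)$ is as tight as or tighter than $C^{\mathrm{Hoef}}(\delta s/(K\ell_K))$.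
   Context: Given $n$ i.i.d. samples in $[0,1]$ with sample mean $\hat\mu_n$, $C^{\alpha'\text{-}\mathrm{Hoef}}(\alpha)=\left(\hat\mu_n\pm\sqrt{\frac{\log(2/\alpha)}{2n}}\cdot\frac{\log(2/\alpha)+\log(2/\alpha')}{2\sqrt{\log(2/\alpha')\log(2/\alpha)}}\right)$ (used here with $\alpha'=\delta$) and $C^{\mathrm{Hoef}}(\alpha)=\left(\hat\mu_n\pm\sqrt{\frac{\log(2/\alpha)}{2n}}\right)$. Here $s$ plays the role of the size $|S|$ of the selected set. *)

(* Defs.v *)
From Stdlib Require Import Reals.
Open Scope R_scope.

Fixpoint harmonic (K : nat) : R :=
  match K with
  | O => 0
  | S k => harmonic k + / INR (S k)
  end.

(* Main.v *)
Require Import Defs.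
From Stdlib Require Import Reals Lra Lia.
Open Scope R_scope.

Lemma harm_ge1 K : (1 <= K)%nat -> 1 <= harmonic K.
Proof.
  induction K as [|k IH]; intros HK; [lia|].
  destruct k as [|k].
  - simpl. rewrite Rinv_1. lra.
  - change (harmonic (S (S k))) with (harmonic (S k) + / INR (S (S k))). assert (1 <= harmonic (S k)) by (apply IH; lia).
    assert (0 < / INR (S (S k))) by (apply Rinv_0_lt_compat; apply lt_0_INR; lia).
    lra.
Qed.

Lemma ln_le x y : 0 < x -> x <= y -> ln x <= ln y.
Proof.
  intros Hx Hxy. destruct (Rle_lt_or_eq_dec _ _ Hxy) as [h|h].
  - left. apply ln_increasing; auto.
  - subst. right. reflexivity.
Qed.

Theorem proposition6 (K n s : nat) (delta : R) :
  (1 <= K)%nat -> (1 <= n)%nat -> 0 < delta < 1 ->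
  (1 <= s)%nat -> (s <= K)%nat ->
  INR s >= INR K / exp (2 * sqrt (ln (2 / delta) * ln (harmonic K))) ->
  sqrt (ln (2 * INR K / (delta * INR s)) / (2 * INR n)) *
    ((ln (2 / delta) + ln (2 * INR K / (delta * INR s))) /
     (2 * sqrt (ln (2 / delta) * ln (2 * INR K / (delta * INR s)))))
  <= sqrt (ln (2 * INR K * harmonic K / (delta * INR s)) / (2 * INR n)).
Proof.
  intros HK Hn Hd Hs HsK Hh.
  assert (PK : 0 < INR K) by (apply lt_0_INR; lia).
  assert (Ps : 0 < INR s) by (apply lt_0_INR; lia).
  assert (Pn : 0 < INR n) by (apply lt_0_INR; lia).
  assert (sK : INR s <= INR K) by (apply le_INR; lia).
  assert (H1 := harm_ge1 K HK).
  set (H := harmonic K) in *.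
  set (a := ln (2 / delta)) in *.
  assert (Pa : 0 < a).
  { unfold a. rewrite <- ln_1. apply ln_increasing; [lra|].
    apply (Rmult_lt_reg_r delta); [lra|]. unfold Rdiv. rewrite Rmult_assoc, Rinv_l; lra. }
  set (c := ln (INR K / INR s)).
  assert (Pc : 0 <= c).
  { unfold c. rewrite <- ln_1. apply ln_le; [lra|].
    apply (Rmult_le_reg_r (INR s)); [lra|]. unfold Rdiv. rewrite Rmult_assoc, Rinv_l; lra. }
  set (L := ln H) in *.
  assert (PL : 0 <= L) by (unfold L; rewrite <- ln_1; apply ln_le; lra).
  assert (Eb : ln (2 * INR K / (delta * INR s)) = a + c).
  { unfold a, c. rewrite <- ln_mult.
    - f_equal. field. lra.
    - apply Rdiv_lt_0_compat; lra.
    - apply Rdiv_lt_0_compat; lra. }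
  assert (EbL : ln (2 * INR K * H / (delta * INR s)) = a + c + L).
  { rewrite <- Eb. unfold L. rewrite <- ln_mult.
    - f_equal. field. lra.
    - apply Rdiv_lt_0_compat; try lra. apply Rmult_lt_0_compat; lra.
    - lra. }
  rewrite Eb, EbL.
  set (t := 2 * sqrt (a * L)) in *.
  assert (Hct : c <= t).
  { unfold c. rewrite <- (ln_exp t). apply ln_le.
    - apply Rdiv_lt_0_compat; lra.
    - assert (0 < exp t) by apply exp_pos.
      apply (Rmult_le_reg_r (INR s)); [lra|]. unfold Rdiv. rewrite Rmult_assoc, Rinv_l by lra.
      assert (HH : INR K / exp t * exp t <= INR s * exp t) by (apply Rmult_le_compat_r; lra).
      replace (INR K / exp t * exp t) with (INR K) in HH by (field; lra). lra. }
  assert (Hc2 : c * c <= 4 * (a * L)).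
  { assert (0 <= sqrt (a * L)) by apply sqrt_pos.
    assert (sqrt (a*L) * sqrt (a*L) = a * L) by (apply sqrt_sqrt; nra).
    unfold t in Hct. nra. }
  assert (Pab : 0 < a * (a + c)) by nra.
  assert (Psq : 0 < sqrt (a * (a + c))) by (apply sqrt_lt_R0; lra).
  assert (Pf : 0 <= (a + (a + c)) / (2 * sqrt (a * (a + c)))).
  { apply Rlt_le, Rdiv_lt_0_compat; lra. }
  rewrite <- (sqrt_square _ Pf).
  rewrite <- sqrt_mult.
  2: { apply Rlt_le, Rdiv_lt_0_compat; lra. }
  2: { nra. }
  apply sqrt_le_1_alt.
  assert (Hs2 : sqrt (a * (a + c)) * sqrt (a * (a + c)) = a * (a + c)) by (apply sqrt_sqrt; lra).
  replace ((a + c) / (2 * INR n) *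
   ((a + (a + c)) / (2 * sqrt (a * (a + c))) * ((a + (a + c)) / (2 * sqrt (a * (a + c))))))
   with ((a + c) * (a + (a + c)) * (a + (a + c)) / (2 * INR n * 4 * (sqrt (a * (a + c)) * sqrt (a * (a + c))))) by (field; lra).
  rewrite Hs2.
  replace ((a + c) * (a + (a + c)) * (a + (a + c)) / (2 * INR n * 4 * (a * (a + c))))
    with ((2*a + c) * (2*a + c) / (4 * a) / (2 * INR n)) by (field; lra).
  unfold Rdiv. apply Rmult_le_compat_r.
  { apply Rlt_le, Rinv_0_lt_compat; lra. }
  apply (Rmult_le_reg_r (4 * a)); [lra|].
  rewrite Rmult_assoc, Rinv_l by lra. nra.
Qed.
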